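(* Let $n\ge1$ be an integer, $I,\Lambda$ non-empty sets and $P$ a $\Lambda\times I$ matrix with entries in $\mathbb{Z}_{n}\cup\{\mathbf{0}\}$. Let $A$ be a finite alphabet. Every language $L\subseteq A^{+}$ recognised by the Rees zero-matrix semigroup $M^{0}[\mathbb{Z}_{n};I,\Lambda;P]$ has generalised star-height at most $1$.
   Context: $\mathbb{Z}_n$ is the cyclic group of order $n$ written additively. For a group $G$, non-empty sets $I,\Lambda$ and a $\Lambda\times I$ matrix $P=(p_{\lambda i})$ with entries in $G\cup\{\mathbf{0}\}$ ($\mathbf{0}$ a new symbol), the Rees zero-matrix semigroup $M^{0}[G;I,\Lambda;P]$ is $(I\times G\times\Lambda)\cup\{\mathbf{0}\}$ with $(i,g,\lambda)(j,h,\mu)=(i,g\,p_{\lambda j}\,h,\mu)$ if $p_{\lambda j}\ne\mathbf{0}$, $=\mathbf{0}$ if $p_{\lambda j}=\mathbf{0}$, and $x\mathbf{0}=\mathbf{0}x=\mathbf{0}$. A language $L\subseteq A^{+}$ is recognised by a semigroup $T$ if there is a semigroup morphism $\psi:A^{+}\to T$ and a subset $X\subseteq T$ with $L=X\psi^{-1}$. Generalised regular expressions over $A$: $\emptyset$, $\varepsilon$ and each letter are expressions; if $E,F$ are expressions so are $E\cup F$, $EF$, $E^{\ast}$, $E^{c}$ (complement in $A^{\ast}$). Star-height: $h(\emptyset)=h(\varepsilon)=h(a)=0$, $h(E\cup F)=h(EF)=\max\{h(E),h(F)\}$, $h(E^{\ast})=h(E)+1$, $h(E^{c})=h(E)$;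 the star-height of a language is the minimum of $h(E)$ over expressions $E$ representing it. *)

(* Defs.v *)
From mathcomp Require Import all_boot all_order all_algebra.
From Stdlib Require List.
Set Implicit Arguments. Unset Strict Implicit. Unset Printing Implicit Defensive.
Import GRing.Theory.

(* Cyclic group Z_n (n >= 1), written additively: ordinals mod n.
   For n >= 1, n.-1.+1 = n. *)
Definition Zn (n : nat) : zmodType := 'I_n.-1.+1.

(* Rees zero-matrix semigroup M^0[G; I, Lambda; P]; None is the zero. *)
Definition rees (G : zmodType) (I L : Type) : Type := option (I * G * L).

Definition rees_mul (G : zmodType) (I L : Type) (P : L -> I -> option G)
  (x y : rees G I L) : rees G I L :=
  match x, y with
  | Some (i, g, l), Some (j, h, m) =>
      match P l j with
      | Some p => Some (i, (g + p + h)%R, m)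
      | None => None
      end
  | _, _ => None
  end.

(* L subset A^+ is recognised by a semigroup (T, mul): there is a semigroup
   morphism psi : A^+ -> T (represented on non-empty words) and X subset T
   with L = X psi^{-1}. *)
Definition recognised (A : Type) (T : Type) (mul : T -> T -> T)
  (Lang : seq A -> Prop) : Prop :=
  exists (psi : seq A -> T) (X : T -> Prop),
    (forall u v, u <> [::] -> v <> [::] -> psi (u ++ v) = mul (psi u) (psi v)) /\
    (forall w, Lang w <-> (w <> [::] /\ X (psi w))).

Inductive gre (A : Type) : Type :=
| GEmpty
| GEps
| GLet (a : A)
| GUnion (E F : gre A)
| GCat (E F : gre A)
| GStar (E : gre A)
| GCompl (E : gre A).

Arguments GEmpty {A}.
Arguments GEps {A}.

Definition star_lang (A : Type) (K : seq A -> Prop) (w : seq A) : Prop :=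
  exists ws : seq (seq A), (forall u, List.In u ws -> K u) /\ w = flatten ws.

Fixpoint gre_lang (A : Type) (E : gre A) : seq A -> Prop :=
  match E with
  | GEmpty => fun _ => False
  | GEps => fun w => w = [::]
  | GLet a => fun w => w = [:: a]
  | GUnion E F => fun w => gre_lang E w \/ gre_lang F w
  | GCat E F => fun w => exists u v, w = u ++ v /\ gre_lang E u /\ gre_lang F v
  | GStar E => star_lang (gre_lang E)
  | GCompl E => fun w => ~ gre_lang E w
  end.

Fixpoint star_height (A : Type) (E : gre A) : nat :=
  match E with
  | GEmpty | GEps | GLet _ => 0
  | GUnion E F | GCat E F => maxn (star_height E) (star_height F)
  | GStar E => (star_height E).+1
  | GCompl E => star_height E
  end.

Definition gsh_le (A : Type) (k : nat) (Lang : seq A -> Prop) : Prop :=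
  exists E : gre A, (star_height E <= k)%N /\ forall w, gre_lang E w <-> Lang w.

(* Main.v *)
Require Import Defs.
From mathcomp Require Import all_boot all_order all_algebra.
From Stdlib Require Import Classical.
Set Implicit Arguments. Unset Strict Implicit. Unset Printing Implicit Defensive.

Section Gen.
Variable A : Type.
Implicit Types (L K : seq A -> Prop).

Lemma gsh_ext k L L' : gsh_le k L -> (forall w, L w <-> L' w) -> gsh_le k L'.
Proof. move=> [E [hE sE]] h; exists E; split=> // w; rewrite sE; exact: h. Qed.

Lemma gsh_union k L K : gsh_le k L -> gsh_le k K -> gsh_le k (fun w => L w \/ K w).
Proof.
move=> [E [hE sE]] [F [hF sF]]; exists (GUnion E F); split=> /=.
  by rewrite geq_max hE hF.
by move=> w; rewrite sE sF.
Qed.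

Lemma gsh_compl k L : gsh_le k L -> gsh_le k (fun w => ~ L w).
Proof.
move=> [E [hE sE]]; exists (GCompl E); split=> //= w; rewrite sE; tauto.
Qed.

Lemma gsh_inter k L K : gsh_le k L -> gsh_le k K -> gsh_le k (fun w => L w /\ K w).
Proof.
move=> hL hK; apply: (gsh_ext (gsh_compl (gsh_union (gsh_compl hL) (gsh_compl hK)))) => w; split; last tauto.
move=> h; split; apply: NNPP => ?; apply: h; tauto.
Qed.

Lemma gsh_all k : @gsh_le A k (fun _ => True).
Proof. by exists (GCompl GEmpty); split=> //= w; split=> // _ []. Qed.

Lemma gsh_none k : @gsh_le A k (fun _ => False).
Proof. by exists GEmpty; split. Qed.

Lemma determined (J : eqType) (K : J -> seq A -> Prop) (l : seq J) L :
  (forall j, j \in l -> gsh_le 1 (K j)) ->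
  (forall w w', (forall j, j \in l -> (K j w <-> K j w')) -> L w -> L w') ->
  gsh_le 1 L.
Proof.
elim: l L => [|j l IH] L hK hdet.
  case: (classic (exists w, L w)) => [[w0 Lw0]|nL].
    apply: (gsh_ext (gsh_all 1)) => w; split=> // _.
    by apply: (hdet w0) => // j; rewrite in_nil.
  apply: (gsh_ext (gsh_none 1)) => w; split=> // Lw; apply: nL; by exists w.
pose L1 w := exists w', K j w' /\ L w' /\ (forall j', j' \in l -> (K j' w <-> K j' w')).
pose L2 w := exists w', ~ K j w' /\ L w' /\ (forall j', j' \in l -> (K j' w <-> K j' w')).
have hK' : forall j', j' \in l -> gsh_le 1 (K j').
  by move=> j' hj'; apply: hK; rewrite in_cons hj' orbT.
have hKj : gsh_le 1 (K j) by apply: hK; rewrite in_cons eqxx.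
have h1 : gsh_le 1 L1.
  apply: (IH _ hK') => w w' heq [v [kv [lv hv]]]; exists v; split=> //; split=> // j' hj'.
  by rewrite -heq // hv.
have h2 : gsh_le 1 L2.
  apply: (IH _ hK') => w w' heq [v [kv [lv hv]]]; exists v; split=> //; split=> // j' hj'.
  by rewrite -heq // hv.
apply: (gsh_ext (gsh_union (gsh_inter hKj h1) (gsh_inter (gsh_compl hKj) h2))) => w.
have allin : forall v, (forall j', j' \in l -> (K j' w <-> K j' v)) -> (K j w <-> K j v) ->
    L v -> L w.
  move=> v hv hj Lv; apply: (hdet v) => // j'; rewrite in_cons => /orP [/eqP -> | hj'].
    by split; apply hj.
  by split; apply hv.
split.
  move=> [[kw [v [kv [Lv hv]]]] | [kw [v [kv [Lv hv]]]]].
    apply: (allin v) => //; tauto.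
  apply: (allin v) => //; tauto.
move=> Lw; case: (classic (K j w)) => kw; [left|right]; split=> //; exists w; tauto.
Qed.

Fixpoint wordE (p : seq A) : gre A :=
  match p with [::] => GEps | x :: s => GCat (GLet x) (wordE s) end.

Lemma wordE_lang p w : gre_lang (wordE p) w <-> w = p.
Proof.
elim: p w => [|x s IH] w /=; first by [].
split.
  by move=> [u [v [-> [-> /IH ->]]]].
move=> ->; exists [:: x], s; split=> //; split=> //; exact/IH.
Qed.

Lemma wordE_h p : star_height (wordE p) = 0.
Proof. by elim: p => //= x s ->. Qed.

Definition AllE : gre A := GCompl GEmpty.
Definition occE p : gre A := GCat AllE (GCat (wordE p) AllE).
Definition occ (p w : seq A) := exists x y, w = x ++ p ++ y.

Lemma occE_lang p w : gre_lang (occE p) w <-> occ p w.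
Proof.
split.
  move=> [x [v [-> [_ [u [y [-> [/wordE_lang -> _]]]]]]]]; by exists x, y.
move=> [x [y ->]]; exists x, (p ++ y); split=> //; split=> //.
exists p, y; split=> //; split=> //; exact/wordE_lang.
Qed.

Lemma occE_h p : star_height (occE p) = 0.
Proof. by rewrite /= wordE_h. Qed.

Fixpoint powE (E : gre A) m : gre A :=
  match m with 0 => GEps | m'.+1 => GCat E (powE E m') end.

Lemma powE_h E m : star_height (powE E m) <= star_height E.
Proof. elim: m => //= m IH; by rewrite geq_max leqnn IH. Qed.

Lemma powE_split E a b u : gre_lang (powE E (a + b)) u ->
  exists u1 u2, u = u1 ++ u2 /\ gre_lang (powE E a) u1 /\ gre_lang (powE E b) u2.
Proof.
elim: a u => [|a IH] u /=.
  move=> h; exists [::], u; split=> //.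
move=> [x [v [-> [hx /IH [u1 [u2 [-> [h1 h2]]]]]]]].
exists (x ++ u1), u2; split; first by rewrite catA.
split=> //; exists x, u1; split=> //.
Qed.

Lemma powE_star E q n u : gre_lang (powE E (q * n)) u -> star_lang (gre_lang (powE E n)) u.
Proof.
elim: q u => [|q IH] u /=.
  move=> ->; by exists [::].
rewrite mulSn => /powE_split [u1 [u2 [-> [h1 /IH [ws [hws ->]]]]]].
exists (u1 :: ws); split=> //= v [<- // | ]; exact: hws.
Qed.

Section Count.
Variable kap : seq A -> nat.
Variable p : seq A.
Hypothesis hadd : forall x v, kap x = 0 -> kap (x ++ p ++ v) = (kap v).+1.
Hypothesis hfirst : forall w, 0 < kap w -> exists x v, w = x ++ p ++ v /\ kap x = 0.
Hypothesis hzero : forall w, kap w = 0 <-> ~ occ p w.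

Let D := GCompl (occE p).
Let Bl := GCat D (wordE p).

Lemma D_lang w : gre_lang D w <-> kap w = 0.
Proof. change (~ gre_lang (occE p) w <-> kap w = 0); rewrite occE_lang hzero; tauto. Qed.

Lemma pow_kap m u v : gre_lang (powE Bl m) u -> kap (u ++ v) = m + kap v.
Proof.
elim: m u => [|m IH] u /=; first by move=> ->.
move=> [x [y [-> [[x1 [x2 [-> [/D_lang k1 /wordE_lang ->]]]] hy]]]].
by rewrite -catA -catA hadd // IH.
Qed.

Lemma star_kap n u v : star_lang (gre_lang (powE Bl n)) u -> kap (u ++ v) %% n = kap v %% n.
Proof.
move=> [ws [hws ->]]; elim: ws hws => [|x ws IH] hws //=.
rewrite -catA (pow_kap _ (hws x _)) /=; last by left.
by rewrite -modnDml modnn add0n IH // => y hy; apply: hws; right.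
Qed.

Lemma decomp m w : kap w = m -> exists u d, w = u ++ d /\ gre_lang (powE Bl m) u /\ kap d = 0.
Proof.
elim: m w => [|m IH] w.
  by move=> h; exists [::], w.
move=> hw; have [x [v [ew kx]]] : exists x v, w = x ++ p ++ v /\ kap x = 0 by apply: hfirst; rewrite hw.
have kv : kap v = m by move: hw; rewrite ew hadd // => -[].
have [u [d [ev [hu hd]]]] := IH _ kv.
exists ((x ++ p) ++ u), d; split; first by rewrite ew ev !catA.
split=> //; exists (x ++ p), u; split=> //; split=> //.
exists x, p; split=> //; split; [exact/D_lang | exact/wordE_lang].
Qed.

Lemma count_mod_gsh n r : 0 < n -> r < n -> gsh_le 1 (fun w => kap w %% n = r).
Proof.
move=> hn hr.
exists (GCat (GStar (powE Bl n)) (GCat (powE Bl r) D)); split.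
  have hD : star_height D = 0 by change (star_height (occE p) = 0); exact: occE_h.
  have h0 : star_height Bl = 0.
    by change (maxn (star_height D) (star_height (wordE p)) = 0); rewrite hD wordE_h.
  change (maxn (star_height (powE Bl n)).+1 (maxn (star_height (powE Bl r)) (star_height D)) <= 1).
  have := powE_h Bl n; have := powE_h Bl r; rewrite h0 !leqn0 => /eqP -> /eqP ->.
  by rewrite hD.
move=> w; split.
  move=> [u [y [-> [hu [u2 [d [-> [h2 /D_lang hd]]]]]]]].
  rewrite star_kap; last exact: hu.
  by rewrite -(cats0 d) (pow_kap _ h2) cats0 hd addn0 modn_small.
move=> hw; have [u [d [ew [hu hd]]]] := decomp (erefl (kap w)).
move: hu; rewrite (divn_eq (kap w) n) hw => /powE_split [u1 [u2 [eu [h1 h2]]]].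
exists u1, (u2 ++ d); split; first by rewrite ew eu catA.
split; first exact: powE_star h1.
exists u2, d; split=> //; split=> //; exact/D_lang.
Qed.
End Count.

End Gen.

Section Cnt.
Variable A : eqType.

Fixpoint cnt1 (a : A) (w : seq A) : nat :=
  match w with [::] => 0 | c :: s => (c == a) + cnt1 a s end.
Fixpoint cnt2 (a b : A) (w : seq A) : nat :=
  match w with [::] => 0 | c :: s => ((c == a) && (ohead s == Some b)) + cnt2 a b s end.

Lemma cnt1_cat a x y : cnt1 a (x ++ y) = cnt1 a x + cnt1 a y.
Proof. by elim: x => //= c x ->; rewrite addnA. Qed.

Lemma cnt1_first a w : 0 < cnt1 a w -> exists x v, w = x ++ [:: a] ++ v /\ cnt1 a x = 0.
Proof.
elim: w => //= c s IH.
case: (eqVneq c a) => [-> _ | ne /= h].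
  by exists [::], s.
have [x [v [-> hx]]] := IH h; exists (c :: x), v; split=> //=; by rewrite (negbTE ne) hx.
Qed.

Lemma cnt1_zero a w : cnt1 a w = 0 <-> ~ occ [:: a] w.
Proof.
split.
  move=> h [x [y ew]]; move: h; rewrite ew cnt1_cat /= eqxx; by rewrite addnS.
move=> h; apply/eqP; rewrite -leqn0 leqNgt; apply/negP => /cnt1_first [x [v [ew _]]].
by apply: h; exists x, v.
Qed.

Lemma cnt1_gsh a n r : 0 < n -> r < n -> gsh_le 1 (fun w => cnt1 a w %% n = r).
Proof.
apply: (count_mod_gsh (p := [:: a])).
- by move=> x v hx; rewrite cnt1_cat hx /= eqxx.
- exact: cnt1_first.
- exact: cnt1_zero.
Qed.

Lemma cnt2_cat_ge a b x y : cnt2 a b y <= cnt2 a b (x ++ y).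
Proof. elim: x => //= c x IH; exact: leq_trans IH (leq_addl _ _). Qed.

Lemma eq_Some (x y : A) : (Some x == Some y) = (x == y).
Proof. by []. Qed.

Section Ne.
Variables (a b : A).
Hypothesis ab : a != b.

Lemma cnt2_add x v : cnt2 a b x = 0 -> cnt2 a b (x ++ [:: a; b] ++ v) = (cnt2 a b v).+1.
Proof.
elim: x => [|c x IH] /=.
  by move=> _; rewrite eqxx eqxx /= eq_sym (negbTE ab).
case: x IH => [|d x] IH /=.
  move=> h; rewrite /= in IH; rewrite IH //=; case: (c == a) => //=.
  rewrite [Some a == Some b](_ : _ = false) //; apply/eqP => -[e]; move: ab; by rewrite e eqxx.
move/eqP; rewrite addn_eq0 => /andP [/eqP -> /eqP h]; rewrite add0n.
exact: IH h.
Qed.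

Lemma cnt2_first w : 0 < cnt2 a b w -> exists x v, w = x ++ [:: a; b] ++ v /\ cnt2 a b x = 0.
Proof.
elim: w => //= c s IH.
case: s IH => [|d s] IH /=; first by case: (c == a).
rewrite eq_Some.
case: (boolP ((c == a) && (d == b))) => [/andP [/eqP -> /eqP ->] _ | hn].
  by exists [::], s.
rewrite add0n => /IH [x [v [ex hx]]]; exists (c :: x), v; split; first by rewrite ex.
move: ex; case: x hx => [|e x] hx /= [ed _]; first by case: (c == a).
rewrite ed in hn; rewrite eq_Some (negbTE hn) add0n; exact: hx.
Qed.

Lemma cnt2_zero w : cnt2 a b w = 0 <-> ~ occ [:: a; b] w.
Proof.
split.
  move=> h [x [y ew]]; move: h; rewrite ew => h.
  have := cnt2_cat_ge a b x ([:: a; b] ++ y); rewrite h /= !eqxx /=; by [].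
move=> h; apply/eqP; rewrite -leqn0 leqNgt; apply/negP => /cnt2_first [x [v [ew _]]].
by apply: h; exists x, v.
Qed.

Lemma cnt2_gsh n r : 0 < n -> r < n -> gsh_le 1 (fun w => cnt2 a b w %% n = r).
Proof.
apply: (count_mod_gsh (p := [:: a; b])).
- exact: cnt2_add.
- exact: cnt2_first.
- exact: cnt2_zero.
Qed.
End Ne.
End Cnt.
Import GRing.Theory.

Lemma Zn_mulrn_mod (n : nat) (hn : (0 < n)%N) (x : Zn n) k : (x *+ k = x *+ (k %% n))%R.
Proof.
have e : k %% n = k %% n.-1.+1 by rewrite prednK.
rewrite e /Zn in x *.
rewrite !Zp_mulrn; apply: val_inj => /=.
by rewrite modnMmr.
Qed.

Lemma Zn_modeq (n : nat) (hn : (0 < n)%N) (x : Zn n) k k' :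
  k %% n = k' %% n -> (x *+ k = x *+ k')%R.
Proof. by move=> e; rewrite (Zn_mulrn_mod hn x k) (Zn_mulrn_mod hn x k') e. Qed.

Lemma cnt1_sum2 (A : finType) (a c : A) s :
  cnt1 a (c :: s) = (c == a) + \sum_(d : A) cnt2 d a (c :: s).
Proof.
elim: s c => [|e s IH] c.
  by rewrite /= big1 // => d _; rewrite andbF.
transitivity ((c == a) + cnt1 a (e :: s)); first by [].
rewrite IH [X in _ = _ + X](eq_bigr (fun d => ((c == d) && (e == a)) + cnt2 d a (e :: s))); last first.
  by move=> d _; rewrite /= ?eq_Some.
rewrite [X in _ = _ + X]big_split; congr (_ + (_ + _)).
rewrite (bigD1 c) //= eqxx /= big1 ?addn0 //.
by move=> d /negbTE; rewrite eq_sym => ->.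
Qed.

Section Main.
Variables (n : nat) (hn : (0 < n)%N) (I Lam : Type) (i0 : I) (l0 : Lam)
  (P : Lam -> I -> option (Zn n)) (A : finType) (t : A -> rees (Zn n) I Lam).

Definition iof a := match t a with Some (i, _, _) => i | None => i0 end.
Definition lof a := match t a with Some (_, _, l) => l | None => l0 end.
Definition gof a : Zn n := match t a with Some (_, g, _) => g | None => 0%R end.
Definition pof a b : Zn n := match P (lof a) (iof b) with Some x => x | None => 0%R end.

Definition theta (w : seq A) : Zn n :=
  (\sum_(a : A) gof a *+ cnt1 a w + \sum_(ab : A * A) pof ab.1 ab.2 *+ cnt2 ab.1 ab.2 w)%R.

Fixpoint F (c : A) (s : seq A) : rees (Zn n) I Lam :=
  match s with [::] => t c | d :: s' => rees_mul P (t c) (F d s') end.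

Definition good (w : seq A) := (forall a, occ [:: a] w -> t a <> None) /\
  (forall a b, occ [:: a; b] w -> P (lof a) (iof b) <> None).

Lemma occ_cons1 (a c : A) s : occ [:: a] (c :: s) -> a = c \/ occ [:: a] s.
Proof.
move=> [[|e x] [y /= [e1 e2]]]; first by left.
by right; exists x, y.
Qed.

Lemma occ_cons2 (a b c d : A) s : occ [:: a; b] (c :: d :: s) -> (a = c /\ b = d) \/ occ [:: a; b] (d :: s).
Proof.
move=> [[|e x] [y /= [e1 e2]]]; first by left; case: e2.
by right; exists x, y.
Qed.

Lemma occ_single1 (a c : A) : occ [:: a] [:: c] -> a = c.
Proof. move=> [x [y]]; case: x => [|e x] /= [] //; by case: x. Qed.

Lemma occ_single2 (a b c : A) : ~ occ [:: a; b] [:: c].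
Proof. move=> [x [y]]; case: x => [|e x] /= [] //; by case: x. Qed.

Lemma occ_prepend p (c : A) s : occ p s -> occ p (c :: s).
Proof. by move=> [x [y ->]]; exists (c :: x), y. Qed.

Lemma sum_delta1 c : (\sum_(a : A) gof a *+ (c == a) = gof c)%R.
Proof.
rewrite (bigD1 c) //= eqxx mulr1n big1 ?addr0 //.
by move=> a /negbTE; rewrite eq_sym => ->.
Qed.

Lemma theta_single c : theta [:: c] = gof c.
Proof.
rewrite /theta /= (eq_bigr (fun a => gof a *+ (c == a))%R); last by move=> a _; rewrite addn0.
rewrite sum_delta1 big1 ?addr0 //.
by move=> [a b] _ /=; rewrite andbF.
Qed.

Lemma sum_delta2 (c d : A) :
  (\sum_(ab : A * A) pof ab.1 ab.2 *+ ((c == ab.1) && (d == ab.2)) = pof c d)%R.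
Proof.
rewrite (bigD1 (c, d)) //= !eqxx mulr1n big1 ?addr0 //.
move=> [a b] /= hab; case: (eqVneq c a) => [ca|//]; case: (eqVneq d b) => [db|//].
by move: hab; rewrite ca db eqxx.
Qed.

Lemma theta_cons c d s : theta [:: c, d & s] = (gof c + pof c d + theta (d :: s))%R.
Proof.
rewrite /theta.
have e1 : (\sum_(a : A) gof a *+ cnt1 a [:: c, d & s] =
    gof c + \sum_(a : A) gof a *+ cnt1 a (d :: s))%R.
  rewrite -(sum_delta1 c) -big_split; apply: eq_bigr => a _; exact: mulrnDr.
have e2 : (\sum_(ab : A * A) pof ab.1 ab.2 *+ cnt2 ab.1 ab.2 [:: c, d & s] =
    pof c d + \sum_(ab : A * A) pof ab.1 ab.2 *+ cnt2 ab.1 ab.2 (d :: s))%R.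
  rewrite -(sum_delta2 c d) -big_split; apply: eq_bigr => -[a b] _.
  rewrite [LHS](_ : _ = pof a b *+ ((c == a) && (d == b) + cnt2 a b (d :: s)))%R; first exact: mulrnDr.
  by rewrite [in LHS]/= eq_Some.
by rewrite e1 e2 addrACA.
Qed.

Lemma F_good c s : good (c :: s) -> F c s = Some (iof c, theta (c :: s), lof (last c s)).
Proof.
elim: s c => [|d s IH] c [g1 g2].
  have : t c <> None by apply: g1; exists [::], [::].
  rewrite /= theta_single /iof /lof /gof; case: (t c) => // [[[i g] l]] _ //.
have gd : good (d :: s).
  split=> [a h | a b h]; [apply: g1 | apply: g2]; exact: occ_prepend.
rewrite /= (IH d gd).
have : t c <> None by apply: g1; exists [::], (d :: s).
have : P (lof c) (iof d) <> None by apply: g2; exists [::], s.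
rewrite theta_cons /pof /iof /lof /gof; case: (t c) => // [[[i g] l]].
rewrite /=; by case: (P l _).
Qed.

Lemma F_some c s : F c s <> None -> good (c :: s).
Proof.
elim: s c => [|d s IH] c /=.
  move=> h; split=> [a /occ_single1 -> // | a b /occ_single2 //].
move=> h.
have gd : good (d :: s).
  apply: IH => e; apply: h; rewrite e; by case: (t c) => [[[i g] l]|].
move: h; rewrite (F_good gd) => h.
have tc : t c <> None by move=> e; apply: h; rewrite e.
have pc : P (lof c) (iof d) <> None.
  move=> e; apply: h; move: e tc; rewrite /lof; case: (t c) => // [[[i g] l]] /= -> //.
case: gd => g1 g2; split.
  move=> a /occ_cons1 [-> // | ]; exact: g1.
move=> a b /occ_cons2 [[-> ->] // | ]; exact: g2.
Qed.

End Main.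
Unset Implicit Arguments.

Lemma good_transfer n I Lam (i0 : I) (l0 : Lam) (P : Lam -> I -> option (Zn n)) (A : finType)
  (t : A -> rees (Zn n) I Lam) (w w' : seq A) :
  (forall a, occ [:: a] w <-> occ [:: a] w') ->
  (forall a b, occ [:: a; b] w <-> occ [:: a; b] w') ->
  good i0 l0 P t w -> good i0 l0 P t w'.
Proof.
move=> h1 h2 [g1 g2]; split=> [a /h1 | a b /h2]; [exact: g1 | exact: g2].
Qed.

Theorem theorem3p3 (n : nat) (hn : (0 < n)%N) (I Lam : Type) (i0 : I) (l0 : Lam)
  (P : Lam -> I -> option (Zn n)) (A : finType) (Lang : seq A -> Prop) :
  recognised (rees_mul P) Lang -> gsh_le 1 Lang.
Proof.
move=> [psi [X [hom hL]]].
pose t a := psi [:: a].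
have psiF : forall c s, psi (c :: s) = F P t c s.
  move=> c s; elim: s c => [|d s IH] c //=.
  rewrite -IH; exact: (hom [:: c] (d :: s)).
pose K (j : ((((A + A) + A) + (A * A)) + (A * 'I_n) + (A * A * 'I_n))%type) (w : seq A) : Prop :=
  match j with
  | inl (inl (inl (inl (inl a)))) => exists v, w = a :: v
  | inl (inl (inl (inl (inr a)))) => exists x, w = x ++ [:: a]
  | inl (inl (inl (inr a))) => occ [:: a] w
  | inl (inl (inr (a, b))) => occ [:: a; b] w
  | inl (inr (a, r)) => (cnt1 a w %% n)%N = r
  | inr (a, b, r) => a != b /\ (cnt2 a b w %% n)%N = r
  end.
refine (@determined _ _ K (enum {: (((A + A) + A) + (A * A)) + (A * 'I_n) + (A * A * 'I_n)}) Lang _ _).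
  move=> j _; rewrite /K; case: j => [[[[[a|a]|a]|[a b]]|[a r]]|[[a b] r]].
  - exists (GCat (GLet a) (AllE A)); split=> // w; split.
      by move=> [u [v [-> [-> _]]]]; exists v.
    by move=> [v ->]; exists [:: a], v; split=> //; split=> // [].
  - exists (GCat (AllE A) (GLet a)); split=> // w; split.
      by move=> [u [v [-> [_ ->]]]]; exists u.
    by move=> [v ->]; exists v, [:: a]; split=> //; split=> // [].
  - exists (occE [:: a]); split; first by rewrite occE_h.
    by move=> w; rewrite occE_lang.
  - exists (occE [:: a; b]); split; first by rewrite occE_h.
    by move=> w; rewrite occE_lang.
  - exact: (cnt1_gsh a hn (ltn_ord r)).
  - case: (eqVneq a b) => [e|ab].
      apply: (gsh_ext (gsh_none _ 1)) => w; split=> // -[] //.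
    apply: (gsh_ext (cnt2_gsh ab hn (ltn_ord r))) => w /=; split; last by case.
    by move=> h; split.
move=> w w' heq.
have H : forall j, K j w <-> K j w' by move=> j; apply: heq; rewrite mem_enum.
rewrite /K in H.
rewrite !hL; case: w heq H => [|c s] _ H [wn Xw] //.
have [s' ew'] : exists s', w' = c :: s'.
  have hj := H (inl (inl (inl (inl (inl c))))); simpl in hj.
  by apply: hj.1; exists s.
subst w'; split=> //.
suff -> : psi (c :: s') = psi (c :: s) by [].
rewrite !psiF.
have hg1 : forall a, occ [:: a] (c :: s) <-> occ [:: a] (c :: s').
  move=> a; exact: (H (inl (inl (inl (inr a))))).
have hg2 : forall a b, occ [:: a; b] (c :: s) <-> occ [:: a; b] (c :: s').
  move=> a b; exact: (H (inl (inl (inr (a, b))))).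
case: (classic (good i0 l0 P t (c :: s))) => g.
  have g' : good i0 l0 P t (c :: s') by apply: good_transfer g.
  rewrite (F_good g) (F_good g').
  have el : last c s' = last c s.
    have [x ex] : exists x, c :: s' = x ++ [:: last c s].
      have hj := H (inl (inl (inl (inl (inr (last c s)))))); simpl in hj.
      apply: hj.1.
      by exists (belast c s); rewrite lastI cats1.
    by have := congr1 (last c) ex; rewrite last_cat /=.
  rewrite el; congr (Some (_, _, _)).
  rewrite /theta; congr (_ + _)%R; apply: eq_bigr.
    move=> a _; apply: Zn_modeq => //.
    have hj := H (inl (inr (a, Ordinal (ltn_pmod (cnt1 a (c :: s)) hn)))); simpl in hj.
    by rewrite (hj.1 erefl).
  move=> [a b] _ /=; case: (eqVneq a b) => [<-|ab].
    set z := pof i0 l0 P t a a.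
    have E : forall w, (z *+ cnt1 a (c :: w) = z *+ (c == a) +
        (z *+ cnt2 a a (c :: w) + z *+ (\sum_(d | d != a) cnt2 d a (c :: w))))%R.
      by move=> w; rewrite cnt1_sum2 (bigD1 a) //= !mulrnDr.
    have e1 : (z *+ cnt1 a (c :: s') = z *+ cnt1 a (c :: s))%R.
      apply: Zn_modeq => //.
      have hj := H (inl (inr (a, Ordinal (ltn_pmod (cnt1 a (c :: s)) hn)))); simpl in hj.
      by rewrite (hj.1 erefl).
    have e2 : (z *+ (\sum_(d | d != a) cnt2 d a (c :: s')) =
               z *+ (\sum_(d | d != a) cnt2 d a (c :: s)))%R.
      apply: Zn_modeq => //; rewrite -modn_summ; symmetry; rewrite -modn_summ; symmetry; congr (_ %% _).
      apply: eq_bigr => d da.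
      have hj := H (inr (d, a, Ordinal (ltn_pmod (cnt2 d a (c :: s)) hn))); simpl in hj.
      by case: (hj.1 (conj da erefl)) => _ ->.
    move: e1; rewrite !E e2 => /addrI; exact: addIr.
  apply: Zn_modeq => //.
  have hj := H (inr (a, b, Ordinal (ltn_pmod (cnt2 a b (c :: s)) hn))); simpl in hj.
  by case: (hj.1 (conj ab erefl)) => _ ->.
have n1 : F P t c s = None.
  case e: (F P t c s) => [x|] //; exfalso; apply: g; apply: (F_some i0 l0); by rewrite e.
have g' : ~ good i0 l0 P t (c :: s').
  move=> g0; apply: g; move: g0; apply: good_transfer => [a|a b]; [by rewrite hg1 | by rewrite hg2].
have n2 : F P t c s' = None.
  case e: (F P t c s') => [x|] //; exfalso; apply: g'; apply: (F_some i0 l0); by rewrite e.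
by rewrite n1 n2.
Qed.
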